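(* Let $(\Omega,\mathcal A)$ be a measurable space and let $K:\Omega\to\mathcal K'(\mathbb C^n)$ be a random compact set. Then its polynomially convex hull $\widehat K$, defined by $\widehat K(\omega)=\widehat{K(\omega)}$, is a random compact set.
   Context: $\mathcal K'(\mathbb C^n)$ is the space of non-empty compact subsets of $\mathbb C^n$ with the Hausdorff distance and its Borel $\sigma$-algebra; a random compact set is a measurable map $\Omega\to\mathcal K'(\mathbb C^n)$. For a compact $L$, $\widehat L=\{z\in\mathbb C^n:|p(z)|\le\max_{x\in L}|p(x)| \text{ for all polynomials } p \text{ on } \mathbb C^n\}$. *)

(* Defs.v *)
From HB Require Import structures.
From mathcomp Require Import all_boot all_order all_algebra.
From mathcomp Require Import all_classical all_reals all_analysis.
From mathcomp Require Import complex.
Import numFieldTopology.Exports numFieldNormedType.Exports.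
Import Order.TTheory GRing.Theory Num.Theory.

Set Implicit Arguments.
Unset Strict Implicit.
Unset Printing Implicit Defensive.

Local Open Scope classical_set_scope.
Local Open Scope ring_scope.

(* The complex numbers R[i] (R a real closed field, e.g. a realType) get the
   topology/uniform structure of their numClosedField norm (the usual one).
   C^n is represented as row vectors 'rV[R[i]]_n with the (product)
   matrix topology, i.e. the standard topology of C^n. *)
HB.instance Definition _ (R : rcfType) :=
  PseudoPointedMetric.copy R[i] (R[i] : numClosedFieldType)^o.

Definition edist (R : realType) (n : nat) (z w : 'rV[R[i]]_n) : R :=
  Num.sqrt (\sum_(j < n) (Normc.normc (z 0 j - w 0 j)) ^+ 2).

Definition pt_set_dist (R : realType) (n : nat) (x : 'rV[R[i]]_n)
    (B : set 'rV[R[i]]_n) : \bar R :=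
  ereal_inf [set (edist x b)%:E | b in B].

Definition hausdorff_dist (R : realType) (n : nat) (A B : set 'rV[R[i]]_n)
    : \bar R :=
  maxe (ereal_sup [set pt_set_dist a B | a in A])
       (ereal_sup [set pt_set_dist b A | b in B]).

Definition Kprime (R : realType) (n : nat) : set (set 'rV[R[i]]_n) :=
  [set L | compact L /\ L !=set0].

Arguments Kprime : clear implicits.

Definition hausdorff_open (R : realType) (n : nat)
    : set (set (set 'rV[R[i]]_n)) :=
  [set U | U `<=` Kprime R n /\
     forall L, U L -> exists2 e : R, 0 < e &
       forall L', Kprime R n L' -> (hausdorff_dist L L' < e%:E)%E -> U L'].

Arguments hausdorff_open : clear implicits.

Definition hausdorff_borel (R : realType) (n : nat)
    : set (set (set 'rV[R[i]]_n)) :=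
  <<s Kprime R n, hausdorff_open R n >>.

Arguments hausdorff_borel : clear implicits.

Definition random_compact_set (d : measure_display) (T : measurableType d)
    (R : realType) (n : nat) (K : T -> set 'rV[R[i]]_n) : Prop :=
  (forall w, Kprime R n (K w)) /\
  (forall B, hausdorff_borel R n B -> measurable (K @^-1` B)).

Definition is_polynomial (R : realType) (n : nat) (p : 'rV[R[i]]_n -> R[i])
    : Prop :=
  exists s : seq (R[i] * ('I_n -> nat)),
    forall z, p z = \sum_(m <- s) m.1 * \prod_(j < n) (z 0 j) ^+ (m.2 j).

(* polynomially convex hull; the max over the compact L is written as sup *)
Definition poly_hull (R : realType) (n : nat) (L : set 'rV[R[i]]_n)
    : set 'rV[R[i]]_n :=
  [set z | forall p, is_polynomial p ->
           Normc.normc (p z) <= sup [set Normc.normc (p x) | x in L]].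

(* Main.v *)
Require Import Defs.
From HB Require Import structures.
From mathcomp Require Import all_boot all_order all_algebra.
From mathcomp Require Import all_classical all_reals all_analysis.
From mathcomp Require Import complex.
From mathcomp Require Import ring lra finmap.
Import numFieldTopology.Exports numFieldNormedType.Exports.
Import Order.TTheory GRing.Theory Num.Theory.

Set Implicit Arguments.
Unset Strict Implicit.
Unset Printing Implicit Defensive.

Section Metric.
Local Open Scope classical_set_scope.
Local Open Scope ring_scope.
Local Open Scope complex_scope.
Variable R : realType.
Variable n : nat.
Local Notation X := 'rV[R[i]]_n.
Local Notation nc := (@Normc.normc R).
Local Notation ed := (@Defs.edist R n).

Lemma nc_ge0 (x : R[i]) : 0 <= nc x.
Proof. by case: x => a b /=; rewrite sqrtr_ge0. Qed.

Lemma ncN (x : R[i]) : nc (- x) = nc x.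
Proof. exact: normcN. Qed.

Lemma ncB (x y : R[i]) : nc (x - y) = nc (y - x).
Proof. by rewrite -ncN opprB. Qed.

Lemma ncD (x y : R[i]) : nc (x + y) <= nc x + nc y.
Proof. exact: le_normcD. Qed.

Lemma nc0 : nc 0 = 0.
Proof. exact: Normc.normc0. Qed.

Lemma ncBtri (x y z : R[i]) : nc (x - z) <= nc (x - y) + nc (y - z).
Proof. by have := ncD (x - y) (y - z); rewrite addrA subrK. Qed.

Lemma sqrt_le_sqrt (a b : R) : 0 <= b -> a <= b -> Num.sqrt a <= Num.sqrt b.
Proof. by move=> b0 ab; rewrite ler_sqrt. Qed.

Lemma edist_ge0 (z w : X) : 0 <= ed z w.
Proof. exact: sqrtr_ge0. Qed.

Lemma edist_sym (z w : X) : ed z w = ed w z.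
Proof. by rewrite /Defs.edist; congr Num.sqrt; apply: eq_bigr => j _; rewrite ncB. Qed.

Lemma edist_xx (z : X) : ed z z = 0.
Proof.
rewrite /Defs.edist big1 ?sqrtr0 // => j _; by rewrite subrr nc0 expr0n.
Qed.

Lemma coord_le_edist (z w : X) j : nc (z 0 j - w 0 j) <= ed z w.
Proof.
rewrite -[X in X <= _]ger0_norm ?nc_ge0 // -sqrtr_sqr /Defs.edist.
apply: sqrt_le_sqrt; first by apply: sumr_ge0 => k _; exact: sqr_ge0.
rewrite (bigD1 j) //= lerDl; apply: sumr_ge0 => k _; exact: sqr_ge0.
Qed.

Lemma sqr_sum_ge (I : finType) (F : I -> R) : (forall i, 0 <= F i) ->
  \sum_i F i ^+ 2 <= (\sum_i F i) ^+ 2.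
Proof.
move=> F0; rewrite /index_enum; elim: (Finite.enum I) => [|a s ih].
  by rewrite !big_nil expr0n.
rewrite !big_cons sqrrD.
have h0 : 0 <= \sum_(j <- s) F j by apply: sumr_ge0 => j _.
have : 0 <= (F a * \sum_(j <- s) F j) *+ 2 by rewrite mulrn_wge0 // mulr_ge0.
lra.
Qed.

Lemma edist_le_sum (z w : X) : ed z w <= \sum_j nc (z 0 j - w 0 j).
Proof.
have h0 : 0 <= \sum_j nc (z 0 j - w 0 j) by apply: sumr_ge0 => j _; exact: nc_ge0.
rewrite -(ger0_norm h0) -sqrtr_sqr /Defs.edist; apply: sqrt_le_sqrt.
  exact: sqr_ge0.
by apply: sqr_sum_ge => j; exact: nc_ge0.
Qed.

Lemma cs_sum (I : finType) (a b : I -> R) :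
  \sum_i a i * b i <= Num.sqrt (\sum_i a i ^+ 2) * Num.sqrt (\sum_i b i ^+ 2).
Proof.
set A := Num.sqrt _; set B := Num.sqrt _.
have A0 : 0 <= A by exact: sqrtr_ge0.
have B0 : 0 <= B by exact: sqrtr_ge0.
have SA : 0 <= \sum_i a i ^+ 2 by apply: sumr_ge0 => i _; exact: sqr_ge0.
have SB : 0 <= \sum_i b i ^+ 2 by apply: sumr_ge0 => i _; exact: sqr_ge0.
have A2 : A ^+ 2 = \sum_i a i ^+ 2 by rewrite sqr_sqrtr.
have B2 : B ^+ 2 = \sum_i b i ^+ 2 by rewrite sqr_sqrtr.
have [Az|Ap] := eqVneq A 0.
  have a0 : forall i, a i = 0.
    move=> i; apply/eqP; rewrite -sqrf_eq0 eq_le sqr_ge0 andbT.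
    have : \sum_i a i ^+ 2 = 0 by rewrite -A2 Az expr0n.
    move/eqP; rewrite psumr_eq0; last by move=> j _; exact: sqr_ge0.
    by move/allP/(_ i (mem_index_enum _))/implyP/(_ isT)/eqP ->.
  rewrite big1 ?Az ?mul0r // => i _; by rewrite a0 mul0r.
have [Bz|Bp] := eqVneq B 0.
  have b0 : forall i, b i = 0.
    move=> i; apply/eqP; rewrite -sqrf_eq0 eq_le sqr_ge0 andbT.
    have : \sum_i b i ^+ 2 = 0 by rewrite -B2 Bz expr0n.
    move/eqP; rewrite psumr_eq0; last by move=> j _; exact: sqr_ge0.
    by move/allP/(_ i (mem_index_enum _))/implyP/(_ isT)/eqP ->.
  rewrite big1 ?Bz ?mulr0 // => i _; by rewrite b0 mulr0.
have Ag : 0 < A by rewrite lt0r Ap.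
have Bg : 0 < B by rewrite lt0r Bp.
have key : forall i, a i * b i <= (B / A) * a i ^+ 2 / 2 + (A / B) * b i ^+ 2 / 2.
  move=> i.
  have h : 0 <= (B * a i - A * b i) ^+ 2 by exact: sqr_ge0.
  have hAB : 0 < A * B by exact: mulr_gt0.
  rewrite -(@ler_pM2l _ (A * B * 2)) ?mulr_gt0 //.
  have -> : A * B * 2 * (B / A * a i ^+ 2 / 2 + A / B * b i ^+ 2 / 2) =
     B ^+ 2 * a i ^+ 2 + A ^+ 2 * b i ^+ 2.
    field; by rewrite Ap Bp.
  move: h; rewrite sqrrB !exprMn; lra.
apply: (le_trans (ler_sum _ (fun i _ => key i))).
rewrite big_split /= -!mulr_suml -!mulr_sumr -A2 -B2.
have -> : B / A * A ^+ 2 / 2 + A / B * B ^+ 2 / 2 = A * B.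
  field; by rewrite Ap Bp.
by [].
Qed.

Lemma edist_triangle (x y z : X) : ed x z <= ed x y + ed y z.
Proof.
set a := fun j => nc (x 0 j - y 0 j).
set b := fun j => nc (y 0 j - z 0 j).
have a0 : forall j, 0 <= a j by move=> j; exact: nc_ge0.
have b0 : forall j, 0 <= b j by move=> j; exact: nc_ge0.
have hA : 0 <= ed x y by exact: edist_ge0.
have hB : 0 <= ed y z by exact: edist_ge0.
rewrite -[X in _ <= X]ger0_norm ?addr_ge0 // -sqrtr_sqr /Defs.edist.
apply: sqrt_le_sqrt; first exact: sqr_ge0.
apply: (@le_trans _ _ (\sum_j (a j + b j) ^+ 2)).
  apply: ler_sum => j _; rewrite ler_sqr ?nnegrE ?nc_ge0 ?addr_ge0 //; exact: ncBtri.
have SA : 0 <= \sum_j a j ^+ 2 by apply: sumr_ge0 => i _; exact: sqr_ge0.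
have SB : 0 <= \sum_j b j ^+ 2 by apply: sumr_ge0 => i _; exact: sqr_ge0.
rewrite -/(Defs.edist x y) -/(Defs.edist y z).
have -> : \sum_j (a j + b j) ^+ 2 = \sum_j a j ^+ 2 + (\sum_j a j * b j) *+ 2 + \sum_j b j ^+ 2.
  rewrite -sumrMnl -!big_split /=; apply: eq_bigr => j _; exact: sqrrD.
have cs := cs_sum a b.
have e1 : ed x y ^+ 2 = \sum_j a j ^+ 2 by rewrite sqr_sqrtr.
have e2 : ed y z ^+ 2 = \sum_j b j ^+ 2 by rewrite sqr_sqrtr.
rewrite sqrrD e1 e2.
have : (\sum_j a j * b j) *+ 2 <= (ed x y * ed y z) *+ 2 by rewrite lerMn2r.
lra.
Qed.


Lemma ltc_nc (x : R[i]) (r : R) : (`|x| < r%:C) = (nc x < r).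
Proof. by rewrite ltcE /= eqxx. Qed.

Lemma nbhs_coord (z : X) (A : set X) : nbhs z A ->
  exists2 r : R, 0 < r & forall w : X, (forall j, nc (z 0 j - w 0 j) < r) -> A w.
Proof.
move=> /nbhs_ballP [e e0 eA].
have ie : complex.Im e = 0 by move: e0 => /=; rewrite ltcE /= => /andP [/eqP <-].
have re : 0 < complex.Re e by move: e0 => /=; rewrite ltcE /= => /andP [_].
have ee : e = (complex.Re e)%:C by case: e ie {e0 eA re} => a b /= ->.
exists (complex.Re e) => // w hw; apply: eA; split => // i j.
rewrite (ord1 i) /ball /= ee ltc_nc; exact: hw.
Qed.

Lemma coord_nbhs (z : X) (A : set X) (r : R) : 0 < r ->
  (forall w : X, (forall j, nc (z 0 j - w 0 j) < r) -> A w) -> nbhs z A.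
Proof.
move=> r0 hA; apply/nbhs_ballP; exists r%:C; first by rewrite /= ltcE /= eqxx.
move=> w [_ hw]; apply: hA => j; have := hw 0 j; by rewrite /ball /= ltc_nc.
Qed.

Lemma nbhs_dball (z : X) (A : set X) : nbhs z A ->
  exists2 r : R, 0 < r & forall w : X, ed z w < r -> A w.
Proof.
move=> /nbhs_coord [r r0 hA]; exists r => // w hw; apply: hA => j.
exact: le_lt_trans (coord_le_edist _ _ _) hw.
Qed.

Lemma dball_nbhs (z : X) (r : R) : 0 < r -> nbhs z [set w | ed z w < r].
Proof.
move=> r0; have n0 : 0 < (n.+1)%:R :> R by rewrite ltr0n.
apply: (@coord_nbhs _ _ (r / (n.+1)%:R)); first by rewrite divr_gt0.
move=> w hw; apply: le_lt_trans (edist_le_sum _ _) _.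
apply: (@le_lt_trans _ _ (\sum_(j < n) (r / (n.+1)%:R))).
  by apply: ler_sum => j _; apply: ltW.
rewrite sumr_const card_ord.
have -> : r / (n.+1)%:R *+ n = r * (n%:R / (n.+1)%:R).
  by rewrite -mulr_natl mulrCA mulrA.
by rewrite gtr_pMr // ltr_pdivrMr // mul1r ltr_nat.
Qed.

Lemma dopen_open (A : set X) :
  (forall z, A z -> exists2 r : R, 0 < r & forall w : X, ed z w < r -> A w) -> open A.
Proof.
move=> hA; rewrite openE => z /hA [r r0 hr].
by apply: filterS (dball_nbhs z r0) => w; apply: hr.
Qed.

Lemma dball_open (z : X) (r : R) : open [set w | ed z w < r].
Proof.
apply: dopen_open => y /= hy; exists (r - ed z y); first by rewrite subr_gt0.
move=> w hw; have := edist_triangle z y w; lra.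
Qed.

Definition polyf (s : seq (R[i] * ('I_n -> nat))) (z : X) : R[i] :=
  \sum_(m <- s) m.1 * \prod_(j < n) (z 0 j) ^+ (m.2 j).

Lemma cont_sum_seq (I : Type) (l : seq I) (f : I -> X -> R[i]^o) :
  (forall i, continuous (f i)) -> continuous (fun z => \sum_(i <- l) f i z).
Proof.
move=> hf; elim: l => [|a l ih].
  rewrite (_ : (fun z => _) = fun=> 0); first exact: cst_continuous.
  by apply: funext => z; rewrite big_nil.
rewrite (_ : (fun z => _) = (f a) + (fun z => \sum_(i <- l) f i z)).
  by move=> z; apply: continuousD; [exact: hf | exact: ih].
by apply: funext => z; rewrite big_cons.
Qed.

Lemma cont_prod_seq (I : Type) (l : seq I) (f : I -> X -> R[i]^o) :
  (forall i, continuous (f i)) -> continuous (fun z => \prod_(i <- l) f i z).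
Proof.
move=> hf; elim: l => [|a l ih].
  rewrite (_ : (fun z => _) = fun=> 1); first exact: cst_continuous.
  by apply: funext => z; rewrite big_nil.
rewrite (_ : (fun z => _) = (f a) \* (fun z => \prod_(i <- l) f i z)).
  by move=> z; apply: continuousM; [exact: hf | exact: ih].
by apply: funext => z; rewrite big_cons.
Qed.

Lemma cont_pow (f : X -> R[i]^o) k : continuous f -> continuous (fun z => f z ^+ k).
Proof.
move=> hf; elim: k => [|k ih].
  rewrite (_ : (fun z => _) = fun=> 1); first exact: cst_continuous.
  by apply: funext => z; rewrite expr0.
rewrite (_ : (fun z => _) = f \* (fun z => f z ^+ k)).
  by move=> z; apply: continuousM; [exact: hf | exact: ih].
by apply: funext => z; rewrite exprS.
Qed.

Lemma polyf_cont s : continuous (polyf s : X -> R[i]^o).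
Proof.
apply: cont_sum_seq => m z; apply: continuousM; first exact: cst_continuous.
apply: cont_prod_seq => j; apply: cont_pow; exact: coord_continuous.
Qed.

Lemma polyE (p : X -> R[i]) : is_polynomial p -> exists s, p = polyf s.
Proof. by move=> [s hs]; exists s; apply: funext => z; rewrite hs. Qed.

Lemma poly_dcont (p : X -> R[i]) : is_polynomial p -> forall (z : X) (e : R), 0 < e ->
  exists2 r : R, 0 < r & forall w : X, ed z w < r -> nc (p z - p w) < e.
Proof.
move=> /polyE [s ->] z e e0.
have hc := @polyf_cont s z.
have epos : (0 : R[i]) < e%:C by rewrite ltcR.
move: hc => /cvgrPdist_lt /(_ e%:C epos) hpre.
have [r r0 hr] := nbhs_dball hpre.
exists r => // w /hr /=. rewrite ltc_nc. done.
Qed.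

Lemma fin_cover (L : set X) (r : X -> R) : compact L ->
  (forall a, L a -> 0 < r a) ->
  exists s : seq X, (forall a, a \in s -> L a) /\
    (forall z, L z -> exists2 a, a \in s & ed a z < r a).
Proof.
rewrite compact_cover => hL r0.
have hop : forall a, L a -> open [set z | ed a z < r a].
  by move=> a _; exact: dball_open.
have hcov : L `<=` cover L (fun a => [set z | ed a z < r a]).
  by move=> z Lz; exists z => //=; rewrite edist_xx; exact: r0.
have [D' D'L cov] := hL X L _ hop hcov.
exists (enum_fset D'); split.
  by move=> a aD; have := D'L a aD; rewrite in_setE.
move=> z /cov [a /= aD hz]; by exists a.
Qed.

Lemma seq_max (s : seq X) (f : X -> R) : exists M, forall a, a \in s -> f a <= M.
Proof.
elim: s => [|b s [M hM]]; first by exists 0.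
exists (Num.max (f b) M) => a; rewrite inE => /orP [/eqP ->|/hM h].
  by rewrite le_max lexx.
by rewrite le_max h orbT.
Qed.

Lemma seq_min (s : seq X) (f : X -> R) : (forall a, a \in s -> 0 < f a) ->
  exists2 m, 0 < m & forall a, a \in s -> m <= f a.
Proof.
elim: s => [|b s ih] h; first by exists 1.
have [|m m0 hm] := ih; first by move=> a as'; apply: h; rewrite inE as' orbT.
have fb : 0 < f b by apply: h; rewrite inE eqxx.
exists (Num.min (f b) m); first by rewrite lt_min fb m0.
move=> a; rewrite inE => /orP [/eqP ->|/hm h'].
  by rewrite ge_min lexx.
by rewrite ge_min h' orbT.
Qed.

Definition dcont (g : X -> R) := forall z (e : R), 0 < e ->
  exists2 r : R, 0 < r & forall w : X, ed z w < r -> `|g z - g w| < e.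

Lemma dcont_bounded (L : set X) (g : X -> R) : compact L -> dcont g ->
  exists M, forall z, L z -> g z <= M.
Proof.
move=> cL gc.
have ex : forall a, exists r : R, 0 < r /\ forall w : X, ed a w < r -> `|g a - g w| < 1.
  by move=> a; have [r r0 hr] := gc a 1 ltr01; exists r.
have [rf hrf] := choice ex.
have [s [sL cov]] := fin_cover (r := rf) cL (fun a _ => (hrf a).1).
have [M hM] := seq_max s g.
exists (M + 1) => z /cov [a aS haz].
have := (hrf a).2 _ haz; have := hM _ aS.
rewrite ltr_norml; lra.
Qed.

Lemma poly_nc_dcont (p : X -> R[i]) : is_polynomial p -> dcont (fun z => nc (p z)).
Proof.
move=> hp z e e0; have [r r0 hr] := poly_dcont hp z e0; exists r => // w /hr h.
apply: le_lt_trans h; rewrite ler_norml; apply/andP; split.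
  have := ncBtri (p w) (p z) 0; rewrite !subr0 ncB; lra.
have := ncBtri (p z) (p w) 0; rewrite !subr0; lra.
Qed.

Lemma poly_bounded (L : set X) (p : X -> R[i]) : compact L -> is_polynomial p ->
  has_ubound [set nc (p x) | x in L].
Proof.
move=> cL hp; have [M hM] := dcont_bounded cL (poly_nc_dcont hp).
by exists M => _ [x Lx <-]; exact: hM.
Qed.

Lemma leb_nbhd (L W : set X) : compact L ->
  (forall z, W z -> exists2 r : R, 0 < r & forall w : X, ed z w < r -> W w) ->
  L `<=` W ->
  exists2 d : R, 0 < d & forall w : X, (exists2 a, L a & ed a w < d) -> W w.
Proof.
move=> cL oW LW.
have ex : forall a, exists r : R, L a -> 0 < r /\ forall w : X, ed a w < r *+ 2 -> W w.
    move=> a; have [La|nLa] := pselect (L a); last by exists 1.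
    have [r r0 hr] := oW a (LW a La); exists (r / 2) => _; split; first by rewrite divr_gt0.
    by move=> w h; apply: hr; move: h; rewrite mulr2n; lra.
have [rf hrf] := choice ex.
have [s [sL cov]] := fin_cover (r := rf) cL (fun a La => ((hrf a) La).1).
have [m m0 hm] := seq_min (f := rf) (fun a aS => ((hrf a) (sL a aS)).1).
exists m => // w [a La haw].
have [b bS hba] := cov a La.
apply: ((hrf b) (sL b bS)).2.
have := edist_triangle b a w; have := hm b bS; rewrite mulr2n; lra.
Qed.

Lemma archi_inv (e : R) : 0 < e -> exists k : nat, (k.+1%:R)^-1 < e.
Proof.
move=> e0; exists (Num.truncn (e^-1)).
have := truncnS_gt (e^-1); set k := Num.truncn _ => hk.
by rewrite invf_plt ?posrE ?ltr0n.
Qed.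

Local Notation Np p L := (sup [set nc (p x) | x in L]).

Lemma Np_ub (L : set X) (p : X -> R[i]) x : compact L -> is_polynomial p -> L x ->
  nc (p x) <= Np p L.
Proof. by move=> cL hp Lx; apply: ub_le_sup; [exact: poly_bounded | exists x]. Qed.

Lemma Np_le (L : set X) (p : X -> R[i]) (M : R) : L !=set0 ->
  (forall x, L x -> nc (p x) <= M) -> Np p L <= M.
Proof.
move=> [x Lx] h; apply: ge_sup; first by exists (nc (p x)), x.
by move=> _ [y Ly <-]; exact: h.
Qed.

Lemma hull_sub (L : set X) : compact L -> L `<=` poly_hull L.
Proof. by move=> cL x Lx p hp; exact: Np_ub. Qed.

Definition coordp (j : 'I_n) (z : X) : R[i] := z 0 j.

Lemma coordp_poly j : is_polynomial (coordp j).
Proof.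
exists [:: (1, fun k : 'I_n => nat_of_bool (k == j))] => z.
rewrite big_cons big_nil addr0 /= mul1r (bigD1 j) //= eqxx expr1 big1 ?mulr1 //.
by move=> k /negbTE ->; rewrite expr0.
Qed.

Lemma hull_coord (L : set X) z j : poly_hull L z ->
  nc (z 0 j) <= Np (coordp j) L.
Proof. by move=> h; exact: (h _ (coordp_poly j)). Qed.

Lemma hull_dclosed (L : set X) z : ~ poly_hull L z ->
  exists2 r : R, 0 < r & forall w : X, ed z w < r -> ~ poly_hull L w.
Proof.
move=> /existsNP [p /not_implyP [hp /negP]]; rewrite -ltNge => hlt.
have e0 : 0 < nc (p z) - Np p L by rewrite subr_gt0.
have [r r0 hr] := poly_nc_dcont hp z e0.
exists r => // w /hr h hw; have := hw p hp.
move: h; rewrite ltr_norml => /andP [_ h2]; lra.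
Qed.

Lemma hull_closed (L : set X) : closed (poly_hull L).
Proof.
rewrite -[poly_hull L]setCK; apply: open_closedC.
apply: dopen_open => z /= hz; have [r r0 hr] := hull_dclosed hz.
by exists r => // w /hr.
Qed.

Lemma nc_ReIm (a b : R) : nc (a +i* b)%C <= `|a| + `|b|.
Proof.
rewrite /= -[X in _ <= X]ger0_norm ?addr_ge0 // -sqrtr_sqr.
apply: sqrt_le_sqrt; first exact: sqr_ge0.
rewrite sqrrD.
have ha : a ^+ 2 = `|a| ^+ 2 by rewrite real_normK ?num_real.
have hb : b ^+ 2 = `|b| ^+ 2 by rewrite real_normK ?num_real.
rewrite ha hb.
have : 0 <= `|a| * `|b| *+ 2 by rewrite mulrn_wge0 // mulr_ge0.
lra.
Qed.

Lemma Re_le_nc (x : R[i]) : `|complex.Re x| <= nc x.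
Proof.
case: x => a b /=; rewrite -sqrtr_sqr; apply: sqrt_le_sqrt.
  by rewrite addr_ge0 // sqr_ge0.
by rewrite lerDl sqr_ge0.
Qed.

Lemma Im_le_nc (x : R[i]) : `|complex.Im x| <= nc x.
Proof.
case: x => a b /=; rewrite -sqrtr_sqr; apply: sqrt_le_sqrt.
  by rewrite addr_ge0 // sqr_ge0.
by rewrite lerDr sqr_ge0.
Qed.

Lemma nbhsC (x : R[i]) (B : set R[i]) : nbhs x B ->
  exists2 r : R, 0 < r & forall y, nc (x - y) < r -> B y.
Proof.
move=> /nbhs_ballP [e e0 eB].
have ie : complex.Im e = 0 by move: e0 => /=; rewrite ltcE /= => /andP [/eqP <-].
have re : 0 < complex.Re e by move: e0 => /=; rewrite ltcE /= => /andP [_].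
have ee : e = (complex.Re e)%:C by case: e ie {e0 eB re} => a b /= ->.
exists (complex.Re e) => // y hy; apply: eB.
by rewrite /ball /= ee ltc_nc.
Qed.

Definition mkC (ab : R * R) : R[i] := (ab.1 +i* ab.2)%C.

Lemma mkC_cont : continuous mkC.
Proof.
move=> [a b] B /= /nbhsC [r r0 hr].
apply/nbhs_ballP; exists (r / 2); first by rewrite /= divr_gt0.
move=> [a' b'] [/= h1 h2]; apply: hr.
apply: le_lt_trans (nc_ReIm _ _) _.
move: h1 h2; rewrite /ball /= => h1 h2; lra.
Qed.

Definition csq (rho : R) : set R[i] := mkC @` (`[- rho, rho] `*` `[- rho, rho]).

Lemma csq_compact rho : compact (csq rho).
Proof.
apply: continuous_compact; first exact: continuous_subspaceT mkC_cont.
by apply: compact_setX; exact: segment_compact.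
Qed.

Lemma csq_in (x : R[i]) rho : nc x <= rho -> csq rho x.
Proof.
move=> h; exists (complex.Re x, complex.Im x); last by case: x {h}.
have h1 := Re_le_nc x; have h2 := Im_le_nc x.
split => /=; rewrite in_itv /= -ler_norml; lra.
Qed.

Lemma hull_compact (L : set X) : compact L -> compact (poly_hull L).
Proof.
move=> cL.
have hP := rV_compact (fun j => @csq_compact (Np (coordp j) L)).
have hP' : compact [set v : X | forall j, csq (Np (coordp j) L) (v 0 j)] by exact: hP.
apply: (subclosed_compact _ hP'). exact: hull_closed.
move=> z hz j; apply: csq_in; exact: hull_coord.
Qed.

Lemma hull_Kprime (L : set X) : Kprime R n L -> Kprime R n (poly_hull L).
Proof.
move=> [cL [x Lx]]; split; first exact: hull_compact.
by exists x; exact: hull_sub.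
Qed.

Lemma nc_sub0 (x : R[i]) : nc (x - 0) = nc x.
Proof. by rewrite subr0. Qed.

Lemma hull_not (L : set X) z : ~ poly_hull L z ->
  exists p, is_polynomial p /\ Np p L < nc (p z).
Proof.
move=> /existsNP [p /not_implyP [hp /negP]]; rewrite -ltNge => hlt.
by exists p.
Qed.

Lemma hull_usc (L : set X) (V : set X) : Kprime R n L ->
  (forall z, V z -> exists2 r : R, 0 < r & forall w : X, ed z w < r -> V w) ->
  poly_hull L `<=` V ->
  exists2 d : R, 0 < d & forall L' : set X, L' !=set0 ->
    (forall z, L' z -> exists2 a, L a & ed a z < d) -> poly_hull L' `<=` V.
Proof.
move=> [cL Lne] oV hLV.
pose rho j := Np (coordp j) L.
pose P' := [set w : X | forall j, nc (w 0 j) <= rho j + 1].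
pose S := P' `&` ~` V.
have cS : compact S.
  have hP := rV_compact (fun j => @csq_compact (rho j + 1)).
  have hP' : compact [set v : X | forall j, csq (rho j + 1) (v 0 j)] by exact: hP.
  apply: (subclosed_compact _ hP'); last first.
    by move=> w [hw _] j; apply: csq_in; exact: hw.
  rewrite -[S]setCK; apply: open_closedC; apply: dopen_open => w /= hw.
  have [Vw|nVw] := pselect (V w).
    have [r r0 hr] := oV w Vw; exists r => // w' /hr Vw' [_ ]; by apply.
  have [j hj] : exists j, rho j + 1 < nc (w 0 j).
    apply: contrapT => hn; apply: hw; split => // j.
    by rewrite leNgt; apply/negP => h; apply: hn; exists j.
  exists (nc (w 0 j) - (rho j + 1)); first by rewrite subr_gt0.
  move=> w' hw' [hP'' _]; have := hP'' j.
  have := coord_le_edist w w' j; have := ncBtri (w 0 j) (w' 0 j) 0.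
  rewrite !nc_sub0; lra.
have ex : forall z, exists t : (X -> R[i]) * R * R, S z ->
    [/\ is_polynomial t.1.1, 0 < t.1.2, 0 < t.2 &
        forall w : X, ed z w < t.2 -> Np t.1.1 L + t.1.2 < nc (t.1.1 w)].
  move=> z; have [Sz|nSz] := pselect (S z); last by exists ((fun _ => 0), 0, 0).
  have [p [hp hlt]] : exists p, is_polynomial p /\ Np p L < nc (p z).
    by apply: hull_not => hz; case: Sz => _; apply; exact: hLV.
  pose eta := (nc (p z) - Np p L) / 2.
  have eta0 : 0 < eta by rewrite divr_gt0 // subr_gt0.
  have [r r0 hr] := poly_nc_dcont hp z eta0.
  exists (p, eta, r) => _; split => // w /hr /=.
  rewrite ltr_norml => /andP [_ h2]; rewrite /eta in h2 *; lra.
have [tf htf] := choice ex.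
have [s [sS cov]] := fin_cover (r := fun z => (tf z).2) cS
  (fun z Sz => (let: And4 _ _ h _ := htf z Sz in h)).
have [eta0 eta00 heta] := seq_min (f := fun z => (tf z).1.2)
  (fun z zs => (let: And4 _ h _ _ := htf z (sS z zs) in h)).
have ex2 : forall z, exists d : R, z \in s -> 0 < d /\
    forall w : X, (exists2 a, L a & ed a w < d) ->
      nc ((tf z).1.1 w) < Np (tf z).1.1 L + eta0.
  move=> z; have [zs|nzs] := boolP (z \in s); last by exists 1.
  have [hp _ _ _] := htf z (sS z zs).
  have o1 : forall y, [set w | nc ((tf z).1.1 w) < Np (tf z).1.1 L + eta0] y ->
      exists2 r : R, 0 < r & forall w : X, ed y w < r ->
        [set w | nc ((tf z).1.1 w) < Np (tf z).1.1 L + eta0] w.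
    move=> y /= hy; have e0 : 0 < Np (tf z).1.1 L + eta0 - nc ((tf z).1.1 y).
      by rewrite subr_gt0.
    have [r r0 hr] := poly_nc_dcont hp y e0.
    exists r => // w /hr; rewrite ltr_norml => /andP [h1 _]; lra.
  have o2 : L `<=` [set w | nc ((tf z).1.1 w) < Np (tf z).1.1 L + eta0].
    move=> y Ly /=; have := Np_ub cL hp Ly; lra.
  have [d d0 hd] := leb_nbhd cL o1 o2.
  by exists d.
have [df hdf] := choice ex2.
have [d0 d00 hd0] := seq_min (f := df) (fun z zs => ((hdf z) zs).1).
exists (Num.min d0 1); first by rewrite lt_min d00 ltr01.
move=> L' L'ne hL' w hw; apply: contrapT => nVw.
have Pw : P' w.
  move=> j; apply: le_trans (hull_coord j hw) _; apply: Np_le => // z' /hL' [a La].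
  rewrite lt_min => /andP [_ h1].
  have h2 := Np_ub cL (coordp_poly j) La.
  rewrite /rho; move: h2; rewrite {1}/coordp => h2.
  have := ncBtri (z' 0 j) (a 0 j) 0; rewrite !nc_sub0.
  have := coord_le_edist a z' j; rewrite ncB; lra.
have [z zs hzw] := cov w (conj Pw nVw).
have [hp _ _ hgt] := htf z (sS z zs).
have h1 := hgt w hzw.
have h2 := heta z zs.
have h3 : Np (tf z).1.1 L' <= Np (tf z).1.1 L + eta0.
  apply: Np_le => // z' /hL' [a La]; rewrite lt_min => /andP [had _].
  apply: ltW; apply: ((hdf z) zs).2; exists a => //.
  exact: lt_le_trans had (hd0 z zs).
have := hw _ hp; lra.
Qed.

Local Notation D := (@pt_set_dist R n).
Local Notation dH := (@hausdorff_dist R n).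

Lemma D_le (a b : X) (B : set X) : B b -> (D a B <= (ed a b)%:E)%E.
Proof. by move=> Bb; apply: ereal_inf_lbound; exists b. Qed.

Lemma D_lt (a : X) (B : set X) (t : R) : (D a B < t%:E)%E ->
  exists2 b, B b & ed a b < t.
Proof.
move=> /ereal_inf_lt [_ [b Bb <-]]; rewrite lte_fin => h; by exists b.
Qed.

Lemma D_ge (a : X) (B : set X) (t : R) : (forall b, B b -> t <= ed a b) ->
  (t%:E <= D a B)%E.
Proof. by move=> h; apply: le_ereal_inf_tmp => _ [b Bb <-]; rewrite lee_fin; exact: h. Qed.

Lemma D_le_eps (a : X) (B : set X) (t : R) :
  (forall e : R, 0 < e -> exists2 b, B b & ed a b < t + e) -> (D a B <= t%:E)%E.
Proof.
move=> h; apply/lee_addgt0Pr => e e0; have [b Bb hb] := h e e0.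
by apply: le_trans (D_le a Bb) _; rewrite -EFinD lee_fin ltW.
Qed.

Lemma dH_le1 (A B : set X) a : A a -> (D a B <= dH A B)%E.
Proof.
move=> Aa; rewrite /hausdorff_dist le_max; apply/orP; left.
by apply: ereal_sup_ubound; exists a.
Qed.

Lemma dH_le2 (A B : set X) b : B b -> (D b A <= dH A B)%E.
Proof.
move=> Bb; rewrite /hausdorff_dist le_max; apply/orP; right.
by apply: ereal_sup_ubound; exists b.
Qed.

Lemma dH_ub (A B : set X) (t : \bar R) : (forall a, A a -> (D a B <= t)%E) ->
  (forall b, B b -> (D b A <= t)%E) -> (dH A B <= t)%E.
Proof.
move=> h1 h2; rewrite /hausdorff_dist ge_max; apply/andP; split;
  apply: ge_ereal_sup => _ [x hx <-]; [exact: h1 | exact: h2].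
Qed.

Lemma dH_sym (A B : set X) : dH A B = dH B A.
Proof. by rewrite /hausdorff_dist maxC. Qed.

Lemma dH_near (A B : set X) (t : R) : (dH A B < t%:E)%E ->
  forall b, B b -> exists2 a, A a & ed a b < t.
Proof.
move=> h b Bb; have /D_lt [a Aa hab] := le_lt_trans (dH_le2 A Bb) h.
by exists a => //; rewrite edist_sym.
Qed.

Lemma dH_tri (A B C : set X) (x y : R) : (dH A B < x%:E)%E -> (dH B C <= y%:E)%E ->
  (dH A C <= (x + y)%:E)%E.
Proof.
move=> hAB hBC; apply: dH_ub.
- move=> a Aa; have /D_lt [b Bb hab] := le_lt_trans (dH_le1 B Aa) hAB.
  apply: D_le_eps => e e0.
  have : (D b C < (y + e)%:E)%E.
    by apply: le_lt_trans (dH_le1 C Bb) _; apply: le_lt_trans hBC _; rewrite lte_fin ltrDl.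
  move=> /D_lt [c Cc hbc]; exists c => //.
  have := edist_triangle a b c; lra.
- move=> c Cc; apply: D_le_eps => e e0.
  have : (D c B < (y + e)%:E)%E.
    by apply: le_lt_trans (dH_le2 B Cc) _; apply: le_lt_trans hBC _; rewrite lte_fin ltrDl.
  move=> /D_lt [b Bb hcb].
  have /D_lt [a Aa hba] := le_lt_trans (dH_le2 A Bb) hAB.
  exists a => //; have := edist_triangle c b a; lra.
Qed.

Local Notation KP := (Kprime R n).
Local Notation HO := (hausdorff_open R n).
Local Notation SB := (hausdorff_borel R n).
Local Notation hull := (@poly_hull R n).

Lemma SB_sigma : sigma_algebra KP SB.
Proof. exact: smallest_sigma_algebra. Qed.

Lemma SB0 : SB set0.
Proof. by case: SB_sigma. Qed.

Lemma SBC A : SB A -> SB (KP `\` A).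
Proof. by case: SB_sigma => _ h _; exact: h. Qed.

Lemma SBU (F : (set (set X))^nat) : (forall k, SB (F k)) -> SB (\bigcup_k F k).
Proof. by case: SB_sigma => _ _ h; exact: h. Qed.

Lemma SB_open U : HO U -> SB U.
Proof. by move=> hU; apply: sub_sigma_algebra. Qed.

Lemma SBI (F : (set (set X))^nat) : (forall k, SB (F k)) ->
  SB (KP `&` \bigcap_k F k).
Proof.
move=> hF.
have -> : KP `&` \bigcap_k F k = KP `\` \bigcup_k (KP `\` F k).
  apply/seteqP; split => L.
    move=> [KL hL]; split => // -[k _ [_ nF]]; apply: nF; exact: hL.
  move=> [KL hL]; split => // k _; apply: contrapT => nF; apply: hL.
  by exists k.
by apply: SBC; apply: SBU => k; apply: SBC.
Qed.

Lemma SBI2 A B : SB A -> SB B -> A `<=` KP -> SB (A `&` B).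
Proof.
move=> hA hB AK.
have := SBI (F := fun k => if k is 0 then A else B) _.
have -> : KP `&` \bigcap_k (fun k => if k is 0 then A else B) k = A `&` B.
  apply/seteqP; split => L.
    by move=> [_ h]; split; [exact: (h 0%N) | exact: (h 1%N)].
  by move=> [hA' hB']; split; [exact: AK | move=> [|k] _].
apply; by case.
Qed.

Definition dopenX (V : set X) :=
  forall z, V z -> exists2 r : R, 0 < r & forall w : X, ed z w < r -> V w.

Lemma pre_inside_open (V : set X) : dopenX V ->
  HO [set L | KP L /\ hull L `<=` V].
Proof.
move=> oV; split; first by move=> L [].
move=> L [KL hLV]; have [d d0 hd] := hull_usc KL oV hLV.
exists d => // L' KL' hLL'; split => //; apply: hd; first by case: KL'.
by move=> z L'z; exact: dH_near hLL' z L'z.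
Qed.

Lemma SB_A1 (F : set X) (r : R) :
  SB [set L | KP L /\ forall a, hull L a -> (D a F <= r%:E)%E].
Proof.
pose V k := [set a : X | (D a F < (r + (k.+1%:R)^-1)%:E)%E].
have oV : forall k, dopenX (V k).
  move=> k z /D_lt [b Fb hzb]; exists (r + (k.+1%:R)^-1 - ed z b).
    by rewrite subr_gt0.
  move=> w hw; rewrite /V /=; apply: le_lt_trans (D_le w Fb) _.
  rewrite lte_fin; have := edist_triangle w z b; rewrite (edist_sym w z) => h3.
  apply: le_lt_trans h3 _; move: hw hzb; set c := (k.+1%:R)^-1; lra.
have -> : [set L | KP L /\ forall a, hull L a -> (D a F <= r%:E)%E] =
    KP `&` \bigcap_k [set L | KP L /\ hull L `<=` V k].
  apply/seteqP; split => L.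
    move=> [KL h]; split => // k _; split => // a /h ha; rewrite /V /=.
    by apply: le_lt_trans ha _; rewrite lte_fin ltrDl invr_gt0 ltr0n.
  move=> [KL h]; split => // a ha; apply/lee_addgt0Pr => e e0.
  have [k hk] := archi_inv e0.
  have [_ /(_ a ha)] := h k I; rewrite /V /= => hlt.
  by apply: ltW; apply: lt_le_trans hlt _; rewrite -EFinD lee_fin lerD2l ltW.
apply: SBI => k; apply: SB_open; exact: pre_inside_open.
Qed.

Lemma SB_A2 (x : X) (r : R) :
  SB [set L | KP L /\ (D x (hull L) <= r%:E)%E].
Proof.
pose W k := [set a : X | r + (k.+1%:R)^-1 < ed x a].
have oW : forall k, dopenX (W k).
  move=> k z hz; exists (ed x z - (r + (k.+1%:R)^-1)); first by rewrite subr_gt0.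
  move=> w hw; rewrite /W /=; have := edist_triangle x w z.
  rewrite (edist_sym w z); move: hz; rewrite /W /= => hz h3.
  change (r + (k.+1%:R)^-1 < ed x w); move: hw hz h3; set c := (k.+1%:R)^-1; lra.
have -> : [set L | KP L /\ (D x (hull L) <= r%:E)%E] =
    KP `\` \bigcup_k [set L | KP L /\ hull L `<=` W k].
  apply/seteqP; split => L.
    move=> [KL h]; split => // -[k _ [_ hW]].
    have : (((r + (k.+1%:R)^-1))%:E <= D x (hull L))%E.
      by apply: D_ge => b /hW; rewrite /W /= => /ltW.
    move=> h2; have := le_trans h2 h; rewrite lee_fin gerDl leNgt invr_gt0 ltr0n.
    done.
  move=> [KL h]; split => //; apply/lee_addgt0Pr => e e0.
  have [k hk] := archi_inv e0.
  have : ~ (hull L `<=` W k) by move=> hW; apply: h; exists k.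
  move=> /existsNP [a /not_implyP [ha /negP]]; rewrite /W /= -leNgt => hxa.
  apply: le_trans (D_le x ha) _; rewrite -EFinD lee_fin.
  by apply: le_trans hxa _; rewrite lerD2l ltW.
apply: SBC; apply: SBU => k; apply: SB_open; exact: pre_inside_open.
Qed.

Definition seqset (t : seq X) : set X := [set b | b \in t].

Lemma SB_ball (t : seq X) (r : R) :
  SB [set L | KP L /\ (dH (seqset t) (hull L) <= r%:E)%E].
Proof.
have key : forall t' : seq X, SB [set L | KP L /\
    (forall a, hull L a -> (D a (seqset t) <= r%:E)%E) /\
    (forall b, b \in t' -> (D b (hull L) <= r%:E)%E)].
  elim => [|b t' ih].
    have -> : [set L | KP L /\ (forall a, hull L a -> (D a (seqset t) <= r%:E)%E) /\
        (forall b, b \in [::] -> (D b (hull L) <= r%:E)%E)] =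
        [set L | KP L /\ forall a, hull L a -> (D a (seqset t) <= r%:E)%E].
      apply/seteqP; split => L; first by move=> [KL [h1 _]].
      by move=> [KL h1]; split.
    exact: SB_A1.
  have -> : [set L | KP L /\ (forall a, hull L a -> (D a (seqset t) <= r%:E)%E) /\
        (forall b', b' \in b :: t' -> (D b' (hull L) <= r%:E)%E)] =
      [set L | KP L /\ (D b (hull L) <= r%:E)%E] `&` [set L | KP L /\
        (forall a, hull L a -> (D a (seqset t) <= r%:E)%E) /\
        (forall b, b \in t' -> (D b (hull L) <= r%:E)%E)].
    apply/seteqP; split => L.
      move=> [KL [h1 h2]]; split; split => //; first by apply: h2; rewrite inE eqxx.
      by split => // b' hb'; apply: h2; rewrite inE hb' orbT.
    move=> [[KL hb] [_ [h1 h2]]]; split => //; split => // b'.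
    by rewrite inE => /orP [/eqP -> //|]; exact: h2.
  by apply: SBI2 => //; [exact: SB_A2 | move=> L []].
have -> : [set L | KP L /\ (dH (seqset t) (hull L) <= r%:E)%E] =
  [set L | KP L /\ (forall a, hull L a -> (D a (seqset t) <= r%:E)%E) /\
    (forall b, b \in t -> (D b (hull L) <= r%:E)%E)].
  apply/seteqP; split => L.
    move=> [KL h]; split => //; split.
      by move=> a ha; apply: le_trans (dH_le2 _ ha) h.
    by move=> b hb; apply: le_trans h; exact: dH_le1.
  by move=> [KL [h1 h2]]; split => //; apply: dH_ub.
exact: key.
Qed.

Definition qpt (v : 'rV[rat * rat]_n) : X :=
  \row_j ((ratr (v 0 j).1 +i* ratr (v 0 j).2)%C).

Lemma rat_approx_C (c : R[i]) (e : R) : 0 < e ->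
  exists q : rat * rat, nc ((ratr q.1 +i* ratr q.2)%C - c) < e.
Proof.
move=> e0; case: c => a b.
have e2 : 0 < e / 2 by rewrite divr_gt0.
have [q1] := @rat_in_itvoo R (a - e / 2) (a + e / 2) ltac:(lra).
have [q2] := @rat_in_itvoo R (b - e / 2) (b + e / 2) ltac:(lra).
rewrite !in_itv /= => /andP [h3 h4] /andP [h1 h2].
exists (q1, q2) => /=.
apply: le_lt_trans (nc_ReIm (ratr q1 - a) (ratr q2 - b)) _.
have : `|ratr q1 - a| < e / 2 by rewrite ltr_norml; apply/andP; split; lra.
have : `|ratr q2 - b| < e / 2 by rewrite ltr_norml; apply/andP; split; lra.
lra.
Qed.

Lemma rat_approx (a : X) (e : R) : 0 < e -> exists v, ed a (qpt v) < e.
Proof.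
move=> e0; have n0 : 0 < (n.+1)%:R :> R by rewrite ltr0n.
have e1 : 0 < e / (n.+1)%:R by rewrite divr_gt0.
have ex : forall j : 'I_n, exists q : rat * rat,
    nc ((ratr q.1 +i* ratr q.2)%C - a 0 j) < e / (n.+1)%:R.
  by move=> j; exact: rat_approx_C.
have [f hf] := choice ex.
exists (\row_j f j); apply: le_lt_trans (edist_le_sum _ _) _.
apply: (@le_lt_trans _ _ (\sum_(j < n) (e / (n.+1)%:R))).
  apply: ler_sum => j _; rewrite ncB /qpt !mxE; exact: ltW.
rewrite sumr_const card_ord.
have -> : e / (n.+1)%:R *+ n = e * (n%:R / (n.+1)%:R).
  by rewrite -mulr_natl mulrCA mulrA.
by rewrite gtr_pMr // ltr_pdivrMr // mul1r ltr_nat.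
Qed.

Lemma separable (M : set X) : compact M -> forall e : R, 0 < e ->
  exists t : seq 'rV[rat * rat]_n, (dH M (seqset (map qpt t)) < e%:E)%E.
Proof.
move=> cM e e0; have e4 : 0 < e / 4 by rewrite divr_gt0.
have [s0 [sM cov]] := fin_cover (r := fun _ => e / 4) cM (fun _ _ => e4).
have ex : forall a : X, exists v, ed a (qpt v) < e / 4 by move=> a; exact: rat_approx.
have [g hg] := choice ex.
exists (map g s0).
apply: (@le_lt_trans _ _ (e / 2)%:E); last by rewrite lte_fin; lra.
apply: dH_ub.
- move=> a Ma; have [b bs hba] := cov a Ma.
  have hin : seqset (map qpt (map g s0)) (qpt (g b)).
    by rewrite /seqset /=; apply: map_f; apply: map_f.
  apply: le_trans (D_le a hin) _; rewrite lee_fin.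
  have := edist_triangle a b (qpt (g b)); have := hg b.
  rewrite (edist_sym a b); lra.
- move=> y; rewrite /seqset /= => /mapP [v /mapP [b bs ->] ->].
  apply: le_trans (D_le _ (sM b bs)) _; rewrite lee_fin edist_sym.
  have := hg b; lra.
Qed.

Definition dec (k : nat) : seq X :=
  map qpt (odflt [::] (@choice.unpickle (seq 'rV[rat * rat]_n) k)).

Lemma SB_pre (U : set (set X)) : HO U -> SB [set L | KP L /\ U (hull L)].
Proof.
move=> [UK hU].
pose rr (j : nat) : R := (j.+1%:R)^-1.
pose T k j := [set L | (forall M, KP M -> (dH (seqset (dec k)) M <= (rr j)%:E)%E -> U M) /\
   KP L /\ (dH (seqset (dec k)) (hull L) <= (rr j)%:E)%E].
have hT : forall k j, SB (T k j).
  move=> k j; have [P|nP] := pselect (forall M, KP M ->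
      (dH (seqset (dec k)) M <= (rr j)%:E)%E -> U M).
    have -> : T k j = [set L | KP L /\ (dH (seqset (dec k)) (hull L) <= (rr j)%:E)%E].
      by apply/seteqP; split => L; [move=> [_ h] | move=> h; split].
    exact: SB_ball.
  have -> : T k j = set0 by apply/seteqP; split => L // [].
  exact: SB0.
have -> : [set L | KP L /\ U (hull L)] = \bigcup_k \bigcup_j T k j.
  apply/seteqP; split => L.
    move=> [KL UhL]; have KhL := hull_Kprime KL.
    have [e e0 he] := hU _ UhL.
    have [j hj] := archi_inv (divr_gt0 e0 (ltr0n R 2)).
    have rj0 : 0 < rr j by rewrite /rr invr_gt0 ltr0n.
    have [t ht] := separable KhL.1 rj0.
    have hdec : dec (choice.pickle t) = map qpt t by rewrite /dec choice.pickleK.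
    exists (choice.pickle t) => //; exists j => //; split; last split => //.
      move=> M KM; rewrite hdec => hM; apply: he => //.
      have h := dH_tri ht hM.
      have h2 : rr j + rr j < e by rewrite /rr; move: hj; set c := (j.+1%:R)^-1; lra.
      by apply: le_lt_trans h _; rewrite lte_fin.
    by rewrite dH_sym hdec; apply: ltW.
  move=> [k _ [j _ [hP [KL hd]]]]; split => //.
  by apply: hP => //; exact: hull_Kprime.
by apply: SBU => k; apply: SBU => j; exact: hT.
Qed.

End Metric.

Section Main.
Local Open Scope classical_set_scope.
Local Open Scope ring_scope.

Lemma main_thm (d : measure_display) (T : measurableType d)
    (R : realType) (n : nat) (K : T -> set 'rV[R[i]]_n) :
  random_compact_set K ->
  random_compact_set (fun w => poly_hull (K w)).
Proof.
move=> [hK hmeas]; split; first by move=> w; exact: hull_Kprime.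
pose G := [set B : set (set 'rV[R[i]]_n) |
  hausdorff_borel R n [set L | Kprime R n L /\ B (poly_hull L)]].
have sG : sigma_algebra (Kprime R n) G.
  split.
  - rewrite /G /=; have -> : [set L | Kprime R n L /\ set0 (poly_hull L)] = set0.
      by apply/seteqP; split => L // [].
    exact: SB0.
  - move=> B; rewrite /G /= => hB.
    have -> : [set L | Kprime R n L /\ (Kprime R n `\` B) (poly_hull L)] =
        Kprime R n `\` [set L | Kprime R n L /\ B (poly_hull L)].
      apply/seteqP; split => L.
        by move=> [KL [_ nB]]; split => // -[].
      move=> [KL nB]; split => //; split; first exact: hull_Kprime.
      by move=> hB'; apply: nB.
    exact: SBC.
  - move=> F; rewrite /G /= => hF.
    have -> : [set L | Kprime R n L /\ (\bigcup_k F k) (poly_hull L)] =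
        \bigcup_k [set L | Kprime R n L /\ F k (poly_hull L)].
      apply/seteqP; split => L.
        by move=> [KL [k _ hk]]; exists k.
      by move=> [k _ [KL hk]]; split => //; exists k.
    exact: SBU.
have HG : hausdorff_open R n `<=` G by move=> U hU; exact: SB_pre.
move=> B hB.
have GB : G B by exact: (smallest_sub sG HG hB).
have -> : (fun w => poly_hull (K w)) @^-1` B =
    K @^-1` [set L | Kprime R n L /\ B (poly_hull L)].
  apply/seteqP; split => w /=; first by move=> h; split.
  by move=> [].
exact: hmeas.
Qed.

End Main.

Theorem theorem6p13 (d : measure_display) (T : measurableType d)
    (R : realType) (n : nat) (K : T -> set 'rV[R[i]]_n) :
  random_compact_set K ->
  random_compact_set (fun w => poly_hull (K w)).
Proof. exact: main_thm. Qed.
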